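(* Let $f:\mathbb{R}^n\to\mathbb{R}$ be bounded below and continuously differentiable with $\nabla f$ Lipschitz with constant $L_{\nabla f}$. Let $x\in\mathbb{R}^n$, $\Delta>0$, points $y_1,\ldots,y_p$ with $\|y_i-x\|\le\beta\Delta$ for some $\beta>0$ and all $i$, with $\hat F$ invertible, and let $m$ be the minimum Frobenius norm quadratic interpolation model of $f$ and $\ell_1,\ldots,\ell_p$ the associated minimum Frobenius norm Lagrange polynomials (see context). Suppose $\max_{y\in B(x,\Delta)}\sum_i|\ell_i(y)|\le\Lambda_1$ and $\max_{y\in B(x,\Delta)}\max_i|\ell_i(y)|\le\Lambda_\infty$. Then for all $y\in B(x,\Delta)$, $|m(y)-f(y)|\le\kappa_{\mathrm{mf}}\Delta^2$ and $\|\nabla m(y)-\nabla f(y)\|\le\kappa_{\mathrm{mg}}\Delta$, where $$\kappa_{\mathrm{mf}}=\frac{L_{\nabla f}+\kappa_H}{2}\beta^2\Lambda_1+\frac{L_{\nabla f}+\kappa_H}{2},\qquad\kappa_{\mathrm{mg}}=2\kappa_{\mathrm{mf}}+2\kappa_H,\qquad \kappa_H:=12L_{\nabla f}p\beta^2\Lambda_\infty.$$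
   Context: Here $n+2\le p\le(n+1)(n+2)/2-1$. Let $\hat s_i=(y_i-x)/\Delta$, $\hat M$ with rows $[1,\hat s_i^T]$, $\hat P_{ij}=\tfrac12(\hat s_i^T\hat s_j)^2$, $\hat F=\begin{bmatrix}\hat P&\hat M\\ \hat M^T&0\end{bmatrix}$. For data values $v_1,\ldots,v_p$, the minimum Frobenius norm interpolant is the quadratic $q(y)=c+g^T(y-x)+\tfrac12(y-x)^TH(y-x)$ with $H$ symmetric minimizing $\tfrac14\|H\|_F^2$ subject to $q(y_i)=v_i$ for all $i$; when $\hat F$ is invertible it is unique and obtained by solving $\hat F[\hat\lambda;c;\Delta g]=[v;0;0_n]$ and setting $H=\sum_i(\hat\lambda_i/\Delta^4)(y_i-x)(y_i-x)^T$. The model $m$ uses $v_i=f(y_i)$; the Lagrange polynomial $\ell_i$ uses $v_j=\delta_{ij}$. $B(x,\Delta)=\{y:\|y-x\|\le\Delta\}$. *)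

(* Defs.v *)
From HB Require Import structures.
From mathcomp Require Import all_boot all_order all_algebra.
From mathcomp Require Import reals.
Set Implicit Arguments. Unset Strict Implicit. Unset Printing Implicit Defensive.
Import Order.TTheory GRing.Theory Num.Theory.
Local Open Scope ring_scope.

Section Defs.
Variable R : realType.

Definition enorm (n : nat) (v : 'cV[R]_n) : R := Num.sqrt (\sum_i (v i 0) ^+ 2).

Definition frob2 (n : nat) (H : 'M[R]_n) : R := \sum_i \sum_j (H i j) ^+ 2.

Definition is_gradient (n : nat) (f : 'cV[R]_n -> R) (g : 'cV[R]_n) (z : 'cV[R]_n) : Prop :=
  forall eps : R, 0 < eps -> exists2 del : R, 0 < del &
    forall h : 'cV[R]_n, enorm h < del ->
      `| f (z + h) - f z - (g^T *m h) 0 0 | <= eps * enorm h.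

Definition qeval (n : nat) (x : 'cV[R]_n) (c : R) (g : 'cV[R]_n) (H : 'M[R]_n)
  (y : 'cV[R]_n) : R :=
  c + (g^T *m (y - x)) 0 0 + 2^-1 * (((y - x)^T *m H) *m (y - x)) 0 0.

(* gradient of q at y (H symmetric): g + H (y - x) *)
Definition qgrad (n : nat) (x : 'cV[R]_n) (g : 'cV[R]_n) (H : 'M[R]_n)
  (y : 'cV[R]_n) : 'cV[R]_n := g + H *m (y - x).

Definition mfn_interp (n p : nat) (x : 'cV[R]_n) (y : 'I_p -> 'cV[R]_n)
  (v : 'I_p -> R) (c : R) (g : 'cV[R]_n) (H : 'M[R]_n) : Prop :=
  [/\ H^T = H,
      (forall i, qeval x c g H (y i) = v i) &
      (forall c' g' H', H'^T = H' -> (forall i, qeval x c' g' H' (y i) = v i) ->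
         4^-1 * frob2 H <= 4^-1 * frob2 H')].

Definition shat (n p : nat) (x : 'cV[R]_n) (Delta : R) (y : 'I_p -> 'cV[R]_n)
  (i : 'I_p) : 'cV[R]_n := Delta^-1 *: (y i - x).

Definition Mhat (n p : nat) (x : 'cV[R]_n) (Delta : R) (y : 'I_p -> 'cV[R]_n)
  : 'M[R]_(p, 1 + n) :=
  \matrix_(i < p) row_mx (1 : 'M[R]_1) (shat x Delta y i)^T.

Definition Phat (n p : nat) (x : 'cV[R]_n) (Delta : R) (y : 'I_p -> 'cV[R]_n)
  : 'M[R]_p :=
  \matrix_(i, j) (2^-1 * (((shat x Delta y i)^T *m shat x Delta y j) 0 0) ^+ 2).

Definition Fhat (n p : nat) (x : 'cV[R]_n) (Delta : R) (y : 'I_p -> 'cV[R]_n)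
  : 'M[R]_(p + (1 + n)) :=
  block_mx (Phat x Delta y) (Mhat x Delta y) (Mhat x Delta y)^T 0.

End Defs.

(* Main.v *)
Require Import Defs.
From HB Require Import structures.
From mathcomp Require Import all_boot all_order all_algebra.
From mathcomp Require Import reals.
From mathcomp Require Import boolp classical_sets functions topology normedtype derive.
From mathcomp Require Import ring lra zify.
Import Order.TTheory GRing.Theory Num.Theory.
Import numFieldNormedType.Exports.
Local Open Scope classical_set_scope.
Local Open Scope ring_scope.


Definition dot {R : realType} {n : nat} (u v : 'cV[R]_n) : R := \sum_i u i 0 * v i 0.

Lemma dotE {R : realType} {n : nat} (u v : 'cV[R]_n) : (u^T *m v) 0 0 = dot u v.
Proof. by rewrite !mxE; apply: eq_bigr => i _; rewrite mxE. Qed.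

Lemma enormE {R : realType} {n : nat} (v : 'cV[R]_n) : enorm v = Num.sqrt (dot v v).
Proof. by rewrite /enorm /dot; congr Num.sqrt; apply: eq_bigr => i _; rewrite expr2. Qed.

Lemma dotC {R : realType} {n : nat} (u v : 'cV[R]_n) : dot u v = dot v u.
Proof. by apply: eq_bigr => i _; rewrite mulrC. Qed.

Lemma dotDl {R : realType} {n : nat} (u v w : 'cV[R]_n) : dot (u + v) w = dot u w + dot v w.
Proof. by rewrite /dot -big_split; apply: eq_bigr => i _; rewrite mxE mulrDl. Qed.

Lemma dotZl {R : realType} {n : nat} (a : R) (u w : 'cV[R]_n) : dot (a *: u) w = a * dot u w.
Proof. by rewrite /dot mulr_sumr; apply: eq_bigr => i _; rewrite mxE mulrA. Qed.

Lemma dotNl {R : realType} {n : nat} (u w : 'cV[R]_n) : dot (- u) w = - dot u w.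
Proof. by rewrite -scaleN1r dotZl mulN1r. Qed.

Lemma dotBl {R : realType} {n : nat} (u v w : 'cV[R]_n) : dot (u - v) w = dot u w - dot v w.
Proof. by rewrite dotDl dotNl. Qed.

Lemma dot0l {R : realType} {n : nat} (w : 'cV[R]_n) : dot 0 w = 0.
Proof. by rewrite /dot big1 // => i _; rewrite mxE mul0r. Qed.

Lemma dotDr {R : realType} {n : nat} (u v w : 'cV[R]_n) : dot w (u + v) = dot w u + dot w v.
Proof. by rewrite dotC dotDl !(dotC w). Qed.
Lemma dotZr {R : realType} {n : nat} (a : R) (u w : 'cV[R]_n) : dot w (a *: u) = a * dot w u.
Proof. by rewrite dotC dotZl dotC. Qed.
Lemma dotNr {R : realType} {n : nat} (u w : 'cV[R]_n) : dot w (- u) = - dot w u.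
Proof. by rewrite dotC dotNl dotC. Qed.
Lemma dotBr {R : realType} {n : nat} (u v w : 'cV[R]_n) : dot w (u - v) = dot w u - dot w v.
Proof. by rewrite dotDr dotNr. Qed.
Lemma dot0r {R : realType} {n : nat} (w : 'cV[R]_n) : dot w 0 = 0.
Proof. by rewrite dotC dot0l. Qed.

Lemma dot_suml {R : realType} {n p : nat} (F : 'I_p -> 'cV[R]_n) w :
  dot (\sum_i F i) w = \sum_i dot (F i) w.
Proof.
elim/big_rec2: _ => [|i a b _ IH]; first by rewrite dot0l.
by rewrite dotDl IH.
Qed.

Lemma dot_sumr {R : realType} {n p : nat} (F : 'I_p -> 'cV[R]_n) w :
  dot w (\sum_i F i) = \sum_i dot w (F i).
Proof. by rewrite dotC dot_suml; apply: eq_bigr => i _; rewrite dotC. Qed.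

Lemma dot_ge0 {R : realType} {n : nat} (u : 'cV[R]_n) : 0 <= dot u u.
Proof. by apply: sumr_ge0 => i _; rewrite -expr2 sqr_ge0. Qed.

Lemma dot_eq0 {R : realType} {n : nat} (u : 'cV[R]_n) : dot u u = 0 -> u = 0.
Proof.
move=> h; apply/matrixP => i j; rewrite (ord1 j) mxE.
have := @psumr_eq0P _ _ predT (fun k => u k 0 * u k 0).
move=> /(_ (fun k _ => _)) H.
have /eqP : u i 0 * u i 0 = 0.
  apply: H => //; first by move=> k; rewrite -expr2 sqr_ge0.
by rewrite mulf_eq0 orbb => /eqP.
Qed.

Lemma enorm_ge0 {R : realType} {n : nat} (u : 'cV[R]_n) : 0 <= enorm u.
Proof. by rewrite enormE sqrtr_ge0. Qed.

Lemma enorm_sq {R : realType} {n : nat} (u : 'cV[R]_n) : enorm u ^+ 2 = dot u u.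
Proof. by rewrite enormE sqr_sqrtr // dot_ge0. Qed.

Lemma enorm_le {R : realType} {n : nat} (u : 'cV[R]_n) (d : R) :
  0 <= d -> (enorm u <= d) = (dot u u <= d ^+ 2).
Proof.
move=> hd; rewrite enormE -{1}(ger0_norm hd) -sqrtr_sqr ler_sqrt //.
by rewrite sqr_ge0.
Qed.

Lemma enormZ {R : realType} {n : nat} (a : R) (u : 'cV[R]_n) : enorm (a *: u) = `|a| * enorm u.
Proof.
by rewrite !enormE dotZl dotZr mulrA -expr2 sqrtrM ?sqr_ge0 // sqrtr_sqr.
Qed.

Lemma cauchy_schwarz {R : realType} {n : nat} (u v : 'cV[R]_n) :
  `|dot u v| <= enorm u * enorm v.
Proof.
have key : dot u v ^+ 2 <= dot u u * dot v v.
  have [b0|bn0] := eqVneq (dot v v) 0.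
    by rewrite (dot_eq0 _ b0) !dot0r expr0n mulr0.
  have bpos : 0 < dot v v by rewrite lt_def bn0 dot_ge0.
  set t := dot u v / dot v v.
  have h1 : t * dot v v = dot u v by rewrite /t divfK.
  have h0 := dot_ge0 (u - t *: v).
  rewrite !(dotBl, dotBr, dotZl, dotZr) (dotC v u) in h0.
  nra.
rewrite !enormE -sqrtrM ?dot_ge0 // -sqrtr_sqr ler_sqrt //.
by rewrite mulr_ge0 ?dot_ge0.
Qed.

Definition qf {R : realType} {n : nat} (H : 'M[R]_n) (a : 'cV[R]_n) : R := dot a (H *m a).

Lemma qevalE {R : realType} {n : nat} (x : 'cV[R]_n) c g H z :
  qeval x c g H z = c + dot g (z - x) + 2^-1 * qf H (z - x).
Proof. by rewrite /qeval /qf dotE -mulmxA dotE. Qed.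

Lemma qfD {R : realType} {n : nat} (H1 H2 : 'M[R]_n) a : qf (H1 + H2) a = qf H1 a + qf H2 a.
Proof. by rewrite /qf mulmxDl dotDr. Qed.
Lemma qfZ {R : realType} {n : nat} (k : R) (H : 'M[R]_n) a : qf (k *: H) a = k * qf H a.
Proof. by rewrite /qf -scalemxAl dotZr. Qed.
Lemma qf0 {R : realType} {n : nat} (a : 'cV[R]_n) : qf 0 a = 0.
Proof. by rewrite /qf mul0mx dot0r. Qed.
Lemma qf_sum {R : realType} {n p : nat} (F : 'I_p -> 'M[R]_n) a :
  qf (\sum_i F i) a = \sum_i qf (F i) a.
Proof. by rewrite /qf mulmx_suml dot_sumr. Qed.
Lemma qfN {R : realType} {n : nat} (H : 'M[R]_n) a : qf H (- a) = qf H a.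
Proof. by rewrite /qf mulmxN dotNl dotNr opprK. Qed.
Lemma qfZv {R : realType} {n : nat} (H : 'M[R]_n) k a : qf H (k *: a) = k ^+ 2 * qf H a.
Proof. by rewrite /qf -scalemxAr dotZl dotZr mulrA expr2. Qed.

Lemma dot_sym {R : realType} {n : nat} (H : 'M[R]_n) a b :
  H^T = H -> dot a (H *m b) = dot b (H *m a).
Proof.
move=> hs; rewrite -!dotE.
have -> : (a^T *m (H *m b)) 0 0 = ((a^T *m (H *m b))^T) 0 0 by rewrite [RHS]mxE.
by rewrite !trmx_mul trmxK hs mulmxA.
Qed.

Lemma qf_polar {R : realType} {n : nat} (H : 'M[R]_n) a b :
  H^T = H -> qf H (a + b) - qf H (a - b) = 4 * dot a (H *m b).
Proof.
move=> hs; rewrite /qf !mulmxDr !mulmxN !dotDl !dotDr !dotNl !dotNr.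
rewrite (dot_sym H b a hs). ring.
Qed.

Lemma qeval_add {R : realType} {n : nat} (x : 'cV[R]_n) c1 g1 H1 c2 g2 H2 z :
  qeval x (c1 + c2) (g1 + g2) (H1 + H2) z = qeval x c1 g1 H1 z + qeval x c2 g2 H2 z.
Proof. rewrite !qevalE dotDl qfD; ring. Qed.

Lemma qeval_scale {R : realType} {n : nat} (x : 'cV[R]_n) k c g H z :
  qeval x (k * c) (k *: g) (k *: H) z = k * qeval x c g H z.
Proof. rewrite !qevalE dotZl qfZ; ring. Qed.

Lemma qeval_sum {R : realType} {n p : nat} (x : 'cV[R]_n) (r : 'I_p -> R) lc lg lH z :
  qeval x (\sum_i r i * lc i) (\sum_i r i *: lg i) (\sum_i r i *: lH i) z
  = \sum_i r i * qeval x (lc i) (lg i) (lH i) z.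
Proof.
rewrite qevalE dot_suml qf_sum.
rewrite [RHS](eq_bigr (fun i => r i * lc i + dot (r i *: lg i) (z - x) + 2^-1 * qf (r i *: lH i) (z - x))).
  by rewrite !big_split /= -mulr_sumr.
by move=> i _; rewrite -qeval_scale qevalE.
Qed.

Lemma qgrad_sum {R : realType} {n p : nat} (x : 'cV[R]_n) (r : 'I_p -> R) lg lH z :
  qgrad x (\sum_i r i *: lg i) (\sum_i r i *: lH i) z
  = \sum_i r i *: qgrad x (lg i) (lH i) z.
Proof.
rewrite /qgrad mulmx_suml -big_split /=; apply: eq_bigr => i _.
by rewrite scalerDr scalemxAl.
Qed.

Lemma sym_sum {R : realType} {n p : nat} (r : 'I_p -> R) (lH : 'I_p -> 'M[R]_n) :
  (forall i, (lH i)^T = lH i) -> (\sum_i r i *: lH i)^T = \sum_i r i *: lH i.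
Proof.
move=> hs; apply/matrixP => a b; rewrite !mxE !summxE; apply: eq_bigr => i _.
by rewrite !mxE; congr (_ * _); rewrite -{1}(hs i) mxE.
Qed.

Definition fip {R : realType} {n : nat} (H D : 'M[R]_n) : R := \sum_i \sum_j H i j * D i j.

Lemma frob2E {R : realType} {n : nat} (H : 'M[R]_n) : frob2 H = fip H H.
Proof. by apply: eq_bigr => i _; apply: eq_bigr => j _; rewrite expr2. Qed.

Lemma fipC {R : realType} {n : nat} (H D : 'M[R]_n) : fip H D = fip D H.
Proof. by apply: eq_bigr => i _; apply: eq_bigr => j _; rewrite mulrC. Qed.

Lemma fipDl {R : realType} {n : nat} (H1 H2 D : 'M[R]_n) : fip (H1 + H2) D = fip H1 D + fip H2 D.
Proof.
rewrite /fip -big_split; apply: eq_bigr => i _; rewrite -big_split.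
by apply: eq_bigr => j _; rewrite mxE mulrDl.
Qed.

Lemma fipZl {R : realType} {n : nat} k (H D : 'M[R]_n) : fip (k *: H) D = k * fip H D.
Proof.
rewrite /fip mulr_sumr; apply: eq_bigr => i _; rewrite mulr_sumr.
by apply: eq_bigr => j _; rewrite mxE mulrA.
Qed.

Lemma fipNl {R : realType} {n : nat} (H D : 'M[R]_n) : fip (- H) D = - fip H D.
Proof. by rewrite -scaleN1r fipZl mulN1r. Qed.

Lemma fip0l {R : realType} {n : nat} (D : 'M[R]_n) : fip 0 D = 0.
Proof. by rewrite -(scale0r (0 : 'M[R]_n)) fipZl mul0r. Qed.

Lemma fip_suml {R : realType} {n p : nat} (F : 'I_p -> 'M[R]_n) D :
  fip (\sum_i F i) D = \sum_i fip (F i) D.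
Proof.
elim/big_rec2: _ => [|i a b _ IH]; first by rewrite fip0l.
by rewrite fipDl IH.
Qed.

Lemma fip_ge0 {R : realType} {n : nat} (D : 'M[R]_n) : 0 <= fip D D.
Proof. by apply: sumr_ge0 => i _; apply: sumr_ge0 => j _; rewrite -expr2 sqr_ge0. Qed.

Lemma fip_eq0 {R : realType} {n : nat} (D : 'M[R]_n) : fip D D = 0 -> D = 0.
Proof.
move=> h; apply/matrixP => i j; rewrite mxE.
have nn1 : forall k, predT k -> 0 <= \sum_j D k j * D k j.
  by move=> k _; apply: sumr_ge0 => l _; rewrite -expr2 sqr_ge0.
have h1 := @psumr_eq0P _ _ predT (fun i => \sum_j D i j * D i j) nn1 h i isT.
have nn2 : forall k, predT k -> 0 <= D i k * D i k.
  by move=> k _; rewrite -expr2 sqr_ge0.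
have /eqP := @psumr_eq0P _ _ predT (fun j => D i j * D i j) nn2 h1 j isT.
by rewrite mulf_eq0 orbb => /eqP.
Qed.

Lemma frob2_expand {R : realType} {n : nat} (H D : 'M[R]_n) (t : R) :
  frob2 (H + t *: D) = frob2 H + 2 * t * fip H D + t ^+ 2 * frob2 D.
Proof.
have fipDr : forall A B C : 'M[R]_n, fip A (B + C) = fip A B + fip A C.
  by move=> A B C; rewrite fipC fipDl !(fipC A).
have fipZr : forall (k : R) (A B : 'M[R]_n), fip A (k *: B) = k * fip A B.
  by move=> k A B; rewrite fipC fipZl fipC.
rewrite !frob2E fipDl !fipDr !fipZl !fipZr (fipC D H).
ring.
Qed.

Lemma qeval_sub {R : realType} {n : nat} (x : 'cV[R]_n) c1 g1 H1 c2 g2 H2 z :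
  qeval x (c1 - c2) (g1 - g2) (H1 - H2) z = qeval x c1 g1 H1 z - qeval x c2 g2 H2 z.
Proof.
have qfB : qf (H1 - H2) (z - x) = qf H1 (z - x) - qf H2 (z - x) by rewrite /qf mulmxBl dotBr.
rewrite !qevalE dotBl qfB; ring.
Qed.

Lemma symB {R : realType} {n : nat} (A B : 'M[R]_n) : A^T = A -> B^T = B -> (A - B)^T = A - B.
Proof. by move=> ha hb; apply/matrixP => i j; rewrite !mxE -{1}ha -{1}hb !mxE. Qed.

Lemma symDZ {R : realType} {n : nat} (A B : 'M[R]_n) t : A^T = A -> B^T = B -> (A + t *: B)^T = A + t *: B.
Proof. by move=> ha hb; apply/matrixP => i j; rewrite !mxE -{1}ha -{1}hb !mxE. Qed.

Lemma frob2_ge0 {R : realType} {n : nat} (D : 'M[R]_n) : 0 <= frob2 D.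
Proof. by rewrite frob2E fip_ge0. Qed.

Lemma mfn_orth {R : realType} {n p : nat} (x : 'cV[R]_n) (y : 'I_p -> 'cV[R]_n) v c g H :
  mfn_interp x y v c g H -> forall c' g' D, D^T = D ->
  (forall i, qeval x c' g' D (y i) = 0) -> fip H D = 0.
Proof.
case=> hs hi hmin c' g' D hD hz.
have key : forall t, 0 <= 2 * t * fip H D + t ^+ 2 * frob2 D.
  move=> t.
  have hq : forall i, qeval x (c + t * c') (g + t *: g') (H + t *: D) (y i) = v i.
    by move=> i; rewrite qeval_add qeval_scale hz mulr0 addr0 hi.
  have := hmin _ _ _ (symDZ H D t hs hD) hq.
  rewrite frob2_expand => h; lra.
have F0 := frob2_ge0 D.
pose t := - fip H D / (frob2 D + 1).
have hk : fip H D = - (t * (frob2 D + 1)).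
  by rewrite /t divfK ?opprK // gt_eqF //; lra.
have h2 := key t; rewrite hk in h2.
have e : 2 * t * (- (t * (frob2 D + 1))) + t ^+ 2 * frob2 D = - (t ^+ 2 * (frob2 D + 2)) by ring.
rewrite e in h2.
have h4 : 0 <= t ^+ 2 * (frob2 D + 2) by apply: mulr_ge0; [exact: sqr_ge0 | lra].
have /eqP : t ^+ 2 * (frob2 D + 2) = 0 by lra.
 rewrite mulf_eq0 sqrf_eq0 => /orP [/eqP t0|/eqP h3]; last by lra.
by rewrite hk t0 mul0r oppr0.
Qed.

Arguments mfn_orth {R n p x y v c g H}.

Lemma mfn_suff {R : realType} {n p : nat} (x : 'cV[R]_n) (y : 'I_p -> 'cV[R]_n) v c g H :
  H^T = H -> (forall i, qeval x c g H (y i) = v i) ->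
  (forall c' g' D, D^T = D -> (forall i, qeval x c' g' D (y i) = 0) -> fip H D = 0) ->
  mfn_interp x y v c g H.
Proof.
move=> hs hi ho; split => // c' g' H' hs' hi'.
have o := ho (c' - c) (g' - g) (H' - H) (symB H' H hs' hs) (fun i => _).
have {}o : fip H (H' - H) = 0 by apply: o => i; rewrite qeval_sub hi hi' subrr.
have -> : H' = H + 1 *: (H' - H) by rewrite scale1r addrC subrK.
rewrite frob2_expand o.
have := frob2_ge0 (H' - H); lra.
Qed.

Lemma Mhat_row {R : realType} {n p : nat} (x : 'cV[R]_n) (Delta : R) (y : 'I_p -> 'cV[R]_n)
  (dc : R) (dg : 'cV[R]_n) i :
  Delta != 0 ->
  (Mhat x Delta y *m col_mx (dc%:M) (Delta *: dg)) i 0 = dc + dot dg (y i - x).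
Proof.
move=> hD.
have -> : (Mhat x Delta y *m col_mx (dc%:M) (Delta *: dg)) i 0
        = (row i (Mhat x Delta y *m col_mx (dc%:M) (Delta *: dg))) 0 0 by rewrite [RHS]mxE.
rewrite row_mul rowK mul_row_col mul1mx mxE dotE /shat.
rewrite [(dc%:M : 'M_1) 0 0]mxE mulr1n.
by rewrite dotZl dotZr mulrA mulVf // mul1r dotC.
Qed.

Lemma mfn_unique {R : realType} {n p : nat} (x : 'cV[R]_n) (Delta : R) (y : 'I_p -> 'cV[R]_n)
  v c1 g1 H1 c2 g2 H2 :
  Fhat x Delta y \in unitmx -> Delta != 0 ->
  mfn_interp x y v c1 g1 H1 -> mfn_interp x y v c2 g2 H2 ->
  [/\ c1 = c2, g1 = g2 & H1 = H2].
Proof.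
move=> hF hD m1 m2.
have m1' := m1; have m2' := m2.
case: m1' => hs1 hi1 _; case: m2' => hs2 hi2 _.
have hz : forall i, qeval x (c2 - c1) (g2 - g1) (H2 - H1) (y i) = 0.
  by move=> i; rewrite qeval_sub hi1 hi2 subrr.
have o1 := mfn_orth m1 _ _ _ (symB H2 H1 hs2 hs1) hz.
have o2 := mfn_orth m2 _ _ _ (symB H2 H1 hs2 hs1) hz.
have eH : H1 = H2.
  have : fip (H2 - H1) (H2 - H1) = 0 by rewrite fipDl fipNl o1 o2 subrr.
  by move/fip_eq0/eqP; rewrite subr_eq0 => /eqP.
subst H2.
have hz' : forall i, (c2 - c1) + dot (g2 - g1) (y i - x) = 0.
  by move=> i; have := hz i; rewrite subrr qevalE qf0 mulr0 addr0.
set u := col_mx ((c2 - c1)%:M : 'M[R]_1) (Delta *: (g2 - g1)).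
have hMu : Mhat x Delta y *m u = 0.
  by apply/matrixP => i j; rewrite (ord1 j) Mhat_row // hz' mxE.
have hFu : Fhat x Delta y *m col_mx (0 : 'cV[R]_p) u = 0.
  by rewrite /Fhat mul_block_col !mulmx0 hMu mul0mx !addr0 col_mx0.
have : col_mx (0 : 'cV[R]_p) u = col_mx 0 0.
  by rewrite col_mx0 -(mulKmx hF (col_mx 0 u)) hFu mulmx0.
case/eq_col_mx => _; rewrite -col_mx0 /u => /eq_col_mx [hc hg].
have ec : c2 - c1 = 0 by have := congr1 (fun M : 'M[R]_1 => M 0 0) hc; rewrite /= !mxE mulr1n.
have eg : g2 - g1 = 0 by move/eqP: hg; rewrite scaler_eq0 (negbTE hD) /= => /eqP.
split => //.
  by apply/eqP; rewrite eq_sym -subr_eq0 ec.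
by apply/eqP; rewrite eq_sym -subr_eq0 eg.
Qed.

Arguments mfn_unique {R n p x Delta y v c1 g1 H1 c2 g2 H2}.

Lemma qfv0 {R : realType} {n : nat} (H : 'M[R]_n) : qf H 0 = 0.
Proof. by rewrite /qf dot0l. Qed.

Lemma lag_dir {R : realType} {n : nat} (x : 'cV[R]_n) c g H (Lam Delta : R) :
  0 < Delta -> H^T = H ->
  (forall z, enorm (z - x) <= Delta -> `|qeval x c g H z| <= Lam) ->
  forall z w, enorm (z - x) <= Delta ->
  `|dot w (qgrad x g H z)| <= 9 * Lam / Delta * enorm w.
Proof.
move=> hD hs hb z w hz.
have hD0 : 0 <= Delta by apply: ltW.
have hb' : forall b, dot b b <= Delta ^+ 2 ->
    `|c + dot g b + 2^-1 * qf H b| <= Lam.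
  move=> b hbb; have := hb (x + b); rewrite qevalE (addrC (x + b)) addKr; apply.
  by rewrite enorm_le.
have L0 : 0 <= Lam.
  have := hb' 0; rewrite dot0r qfv0 mulr0 !addr0 => h.
  have h' := h (sqr_ge0 _); exact: le_trans (normr_ge0 _) h'.
have Qb : forall b, dot b b <= Delta ^+ 2 -> `|qf H b| <= 4 * Lam.
  move=> b hbb.
  have h1 := hb' b hbb.
  have h2 := hb' (- b); rewrite dotNl dotNr opprK qfN dotNr in h2.
  have h3 := hb' 0; rewrite dot0r qfv0 mulr0 !addr0 in h3.
  have {h2}h2 := h2 hbb; have {h3}h3 := h3 (sqr_ge0 _).
  have -> : qf H b = (c + dot g b + 2^-1 * qf H b) + (c + - dot g b + 2^-1 * qf H b) - 2 * c by field.
  move: h1 h2 h3; rewrite !ler_norml => /andP [h1 h1'] /andP [h2 h2'] /andP [h3 h3'].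
  rewrite dot0r in h3 h3'; apply/andP; split; lra.
have Gb : forall b, dot b b <= Delta ^+ 2 -> `|dot g b| <= Lam.
  move=> b hbb.
  have h1 := hb' b hbb.
  have h2 := hb' (- b); rewrite dotNl dotNr opprK qfN dotNr in h2.
  have {h2}h2 := h2 hbb.
  have -> : dot g b = 2^-1 * ((c + dot g b + 2^-1 * qf H b) - (c + - dot g b + 2^-1 * qf H b)) by field.
  move: h1 h2; rewrite !ler_norml => /andP [h1 h1'] /andP [h2 h2'].
  apply/andP; split; lra.
have HB : forall a b, dot a a <= Delta ^+ 2 -> dot b b <= Delta ^+ 2 -> `|dot a (H *m b)| <= 8 * Lam.
  move=> a b ha hb2.
  have hab1 : dot (2^-1 *: (a + b)) (2^-1 *: (a + b)) <= Delta ^+ 2.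
    have hge := dot_ge0 (a - b).
    rewrite !(dotZl, dotZr, dotDl, dotDr, dotNl, dotNr) (dotC b a) in hge *; lra.
  have hab2 : dot (2^-1 *: (a - b)) (2^-1 *: (a - b)) <= Delta ^+ 2.
    have hge := dot_ge0 (a + b).
    rewrite !(dotZl, dotZr, dotDl, dotDr, dotNl, dotNr) (dotC b a) in hge *; lra.
  have q1 := Qb _ hab1.
  have q2 := Qb _ hab2.
  rewrite qfZv in q1; rewrite qfZv in q2.
  have -> : dot a (H *m b) = 4^-1 * (qf H (a + b) - qf H (a - b)).
    by rewrite qf_polar // mulrA mulVf ?mul1r //; lra.
  have -> : qf H (a + b) = 4 * ((2^-1) ^+ 2 * qf H (a + b)) by field.
  have -> : qf H (a - b) = 4 * ((2^-1) ^+ 2 * qf H (a - b)) by field.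
  move: q1 q2; rewrite !ler_norml => /andP [q1 q1'] /andP [q2 q2'].
  apply/andP; split; lra.
have a0 : dot (z - x) (z - x) <= Delta ^+ 2 by rewrite -enorm_le.
have [w0|wn0] := eqVneq (enorm w) 0.
  have : dot w w = 0 by rewrite -enorm_sq w0 expr0n.
  move/dot_eq0 => hw; rewrite w0 hw dot0l normr0 mulr0 //.
have e0 : 0 < enorm w by rewrite lt_def wn0 enorm_ge0.
set t := Delta / enorm w.
have t0 : 0 < t by rewrite /t divr_gt0.
have uu : dot (t *: w) (t *: w) <= Delta ^+ 2.
  rewrite dotZl dotZr -enorm_sq /t le_eqVlt; apply/orP; left; apply/eqP; field.
  by rewrite lt0r_neq0.
have h1 := Gb _ uu. rewrite dotC in h1.
have h2 := HB _ _ uu a0.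
have key : t * `|dot w (qgrad x g H z)| <= 9 * Lam.
  rewrite -(gtr0_norm t0) -normrM -dotZl /qgrad dotDr.
  apply: le_trans (ler_normD _ _) _; lra.
have -> : `|dot w (qgrad x g H z)| = (t * `|dot w (qgrad x g H z)|) * (enorm w / Delta).
  rewrite /t; field; rewrite lt0r_neq0 //.
have -> : 9 * Lam / Delta * enorm w = 9 * Lam * (enorm w / Delta) by rewrite mulrAC -mulrA.
apply: ler_wpM2r => //; rewrite divr_ge0 // ?enorm_ge0 //.
Qed.


Lemma grad_line_derive {R : realType} {n : nat} (f : 'cV[R]_n -> R) (gradf : 'cV[R]_n -> 'cV[R]_n)
  (f_grad : forall z, is_gradient f (gradf z) z) (x h : 'cV[R]_n) (t : R) :
  is_derive t 1 (fun s : R => f (x + s *: h)) (dot (gradf (x + t *: h)) h).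
Proof.
set D := dot (gradf (x + t *: h)) h.
set g := (fun s : R => f (x + s *: h)).
have hc : (fun s : R => s^-1 *: ((g \o shift t) (s *: 1) - g t)) @ 0^' --> D.
  apply/cvgrPdist_le => eps e0.
  set N := enorm h.
  have N0 : 0 <= N by apply: enorm_ge0.
  have N1 : 0 < N + 1 by lra.
  have [del del0 Hd] := f_grad (x + t *: h) (eps / (N + 1)) (divr_gt0 e0 N1).
  rewrite /dnbhs /within /=; apply/nbhs_ballP; exists (del / (N + 1)) => /=.
    by apply: divr_gt0.
  move=> s; rewrite /ball /= sub0r normrN => hs s0.
  have sa : 0 < `|s| by rewrite normr_gt0.
  have hk : enorm (s *: h) < del.
    rewrite enormZ -/N.
    have h2 : `|s| * (N + 1) < del by rewrite -ltr_pdivlMr.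
    rewrite mulrDr mulr1 in h2; lra.
  have := Hd _ hk; rewrite dotE dotZr enormZ.
  have -> : x + t *: h + s *: h = x + (s%:A + t) *: h.
    by rewrite [s%:A]mulr1 scalerDl addrA (addrAC x).
  rewrite -/(g (s%:A + t)) -/(g t) -/D => h1.
  have -> : D - s^-1 *: (g (s%:A + t) - g t) = - s^-1 * (g (s%:A + t) - g t - s * D).
    have -> : s^-1 *: (g (s%:A + t) - g t) = s^-1 * (g (s%:A + t) - g t) by [].
    field; exact: s0.
  rewrite normrM normrN normfV ler_pdivrMl //.
  apply: le_trans h1 _.
  rewrite -/N.
  have hq : N / (N + 1) <= 1 by rewrite ler_pdivrMr // mul1r; lra.
  have -> : eps / (N + 1) * (`|s| * N) = `|s| * eps * (N / (N + 1)).
    by field; lra.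
  apply: ler_piMr => //; apply: mulr_ge0; lra.
apply: DeriveDef; first exact: cvgP hc.
exact: cvg_lim hc.
Qed.

Lemma taylor_side {R : realType} {n : nat} (f : 'cV[R]_n -> R) (gradf : 'cV[R]_n -> 'cV[R]_n) (L : R)
  (f_grad : forall z, is_gradient f (gradf z) z)
  (lip : forall a b, enorm (gradf a - gradf b) <= L * enorm (a - b))
  (x h : 'cV[R]_n) (sg : R) : `|sg| = 1 ->
  sg * (f (x + h) - f x - dot (gradf x) h) <= L / 2 * dot h h.
Proof.
move=> hsg.
set D0 := dot (gradf x) h; set N := dot h h.
pose g := fun s : R => f (x + s *: h).
pose psi : R -> R := ((sg \*: g : R -> R) - ((sg * D0) \*: (@id R) : R -> R)) - ((L / 2 * N) \*: ((@id R) ^+ 2) : R -> R).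
have psiE : forall s, psi s = sg * f (x + s *: h) - sg * D0 * s - L / 2 * N * s ^+ 2.
  by move=> s; rewrite /psi /=.
have dpsi : forall s : R, is_derive s (1 : R) psi (sg * (dot (gradf (x + s *: h)) h - D0) - L * N * s).
  move=> s; have hg := grad_line_derive _ _ f_grad x h s.
  apply: is_derive_eq.
  have e1 : forall a b : R, a *: b = a * b by [].
  by rewrite !e1 /= expr1; field.
have cont : {within `[0, 1], continuous psi}.
  apply: derivable_within_continuous => u _; exact: (dpsi u).(ex_derive).
have [c hc e] := MVT ltr01 (fun s _ => dpsi s) cont.
rewrite !psiE scale0r addr0 scale1r in e.
move: hc; rewrite in_itv /= => /andP [c0 c1].
have B : sg * (dot (gradf (x + c *: h)) h - D0) <= L * c * N.
  apply: le_trans (ler_norm _) _.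
  rewrite normrM hsg mul1r /D0 -dotBl.
  apply: le_trans (cauchy_schwarz _ _) _.
  apply: le_trans (ler_wpM2r (enorm_ge0 h) (lip _ _)) _.
  by rewrite (addrC x) addrK enormZ gtr0_norm // /N -enorm_sq expr2 !mulrA.
nra.
Qed.

Lemma taylor {R : realType} {n : nat} (f : 'cV[R]_n -> R) (gradf : 'cV[R]_n -> 'cV[R]_n) (L : R)
  (f_grad : forall z, is_gradient f (gradf z) z)
  (lip : forall a b, enorm (gradf a - gradf b) <= L * enorm (a - b))
  (x z : 'cV[R]_n) :
  `|f z - f x - dot (gradf x) (z - x)| <= L / 2 * dot (z - x) (z - x).
Proof.
have h1 := taylor_side _ _ _ f_grad lip x (z - x) 1 (normr1 R).
have h2 := taylor_side _ _ _ f_grad lip x (z - x) (-1) (normrN1 R).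
rewrite (addrC x) subrK in h1 h2.
rewrite ler_norml; apply/andP; split; lra.
Qed.


Theorem theorem6p8 (R : realType) (n p : nat)
  (hp : (n + 2 <= p <= ((n + 1) * (n + 2)) %/ 2 - 1)%N)
  (f : 'cV[R]_n -> R) (gradf : 'cV[R]_n -> 'cV[R]_n) (Lg : R)
  (f_lb : exists lb : R, forall z, lb <= f z)
  (f_grad : forall z, is_gradient f (gradf z) z)
  (grad_lip : forall a b, enorm (gradf a - gradf b) <= Lg * enorm (a - b))
  (x : 'cV[R]_n) (Delta beta : R) (hDelta : 0 < Delta) (hbeta : 0 < beta)
  (y : 'I_p -> 'cV[R]_n)
  (hy : forall i, enorm (y i - x) <= beta * Delta)
  (hF : Fhat x Delta y \in unitmx)
  (mc : R) (mg : 'cV[R]_n) (mH : 'M[R]_n)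
  (hm : mfn_interp x y (fun i => f (y i)) mc mg mH)
  (lc : 'I_p -> R) (lg : 'I_p -> 'cV[R]_n) (lH : 'I_p -> 'M[R]_n)
  (hl : forall i, mfn_interp x y (fun j => if j == i then 1 else 0)
                    (lc i) (lg i) (lH i))
  (Lam1 Laminf : R)
  (hLam1 : forall z, enorm (z - x) <= Delta ->
     \sum_i `| qeval x (lc i) (lg i) (lH i) z | <= Lam1)
  (hLaminf : forall z, enorm (z - x) <= Delta -> forall i,
     `| qeval x (lc i) (lg i) (lH i) z | <= Laminf) :
  let kH := 12 * Lg * p%:R * beta ^+ 2 * Laminf in
  let kmf := (Lg + kH) / 2 * beta ^+ 2 * Lam1 + (Lg + kH) / 2 in
  let kmg := 2 * kmf + 2 * kH in
  forall z, enorm (z - x) <= Delta ->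
    `| qeval x mc mg mH z - f z | <= kmf * Delta ^+ 2 /\
    enorm (qgrad x mg mH z - gradf z) <= kmg * Delta.
Proof.
move=> kH kmf kmg z hz.
have n0 : (0 < n)%N by move: hp; case/andP; lia.
have p0 : (0 < p)%N by move: hp; case/andP; lia.
have hD0 : Delta != 0 by rewrite gt_eqF.
have enorm0 : enorm (0 : 'cV[R]_n) = 0 by rewrite enormE dot0l sqrtr0.
have L0 : 0 <= Lg.
  pose e : 'cV[R]_n := const_mx 1.
  have de : dot e e = n%:R.
    rewrite /dot (eq_bigr (fun _ => 1)); last by move=> i _; rewrite !mxE mulr1.
    by rewrite sumr_const card_ord.
  have ep : 0 < enorm e by rewrite enormE de sqrtr_gt0 ltr0n.
  have := grad_lip (x + e) x; rewrite (addrC x) addrK => h.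
  have := le_trans (enorm_ge0 _) h; rewrite pmulr_lge0 //.
have Li0 : 0 <= Laminf.
  have := hLaminf x _ (Ordinal p0); rewrite subrr enorm0 => /(_ (ltW hDelta)).
  exact: le_trans (normr_ge0 _).
have La0 : 0 <= Lam1 by apply: le_trans (hLam1 z hz); apply: sumr_ge0 => i _.
have kH0 : 0 <= kH.
  rewrite /kH; apply: mulr_ge0 => //; apply: mulr_ge0; last exact: sqr_ge0.
  apply: mulr_ge0; last exact: ler0n.
  by apply: mulr_ge0.
pose r := fun i => f (y i) - f x - dot (gradf x) (y i - x).
have bD0 : 0 <= beta * Delta by apply: mulr_ge0; apply: ltW.
have hr : forall i, `|r i| <= Lg / 2 * (beta ^+ 2 * Delta ^+ 2).
  move=> i; apply: le_trans (taylor _ _ _ f_grad grad_lip x (y i)) _.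
  rewrite -exprMn; apply: ler_wpM2l; first by apply: divr_ge0.
  by rewrite -enorm_le.
have hlsym : forall i, (lH i)^T = lH i by move=> i; case: (hl i).
have hA : mfn_interp x y (fun i => f (y i)) (f x + \sum_i r i * lc i)
    (gradf x + \sum_i r i *: lg i) (0 + \sum_i r i *: lH i).
  apply: mfn_suff.
  - by rewrite add0r; apply: sym_sum.
  - move=> j; rewrite qeval_add qeval_sum qevalE qf0 mulr0 addr0.
    have -> : \sum_i r i * qeval x (lc i) (lg i) (lH i) (y j) = r j.
      rewrite (bigD1 j) //= big1 ?addr0.
        by case: (hl j) => _ hi _; rewrite hi eqxx mulr1.
      move=> i hij; case: (hl i) => _ hi _; rewrite hi.
      by rewrite eq_sym (negbTE hij) mulr0.
    rewrite /r; ring.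
  - move=> c' g' D hD hz0; rewrite fipDl fip0l add0r fip_suml big1 // => i _.
    by rewrite fipZl (mfn_orth (hl i) _ _ _ hD hz0) mulr0.
have [ec eg eH] := mfn_unique hF hD0 hm hA.
pose S w := \sum_i r i * qeval x (lc i) (lg i) (lH i) w.
have mE : qeval x mc mg mH z = f x + dot (gradf x) (z - x) + S z.
  by rewrite ec eg eH qeval_add qeval_sum qevalE qf0 mulr0 addr0.
have gE : qgrad x mg mH z = gradf x + \sum_i r i *: qgrad x (lg i) (lH i) z.
  by rewrite eg eH -qgrad_sum /qgrad mulmxDl mul0mx add0r addrA.
have hzz : dot (z - x) (z - x) <= Delta ^+ 2 by rewrite -enorm_le // ltW.
have c0 : 0 <= Lg / 2 * (beta ^+ 2 * Delta ^+ 2).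
  by apply: mulr_ge0; [apply: divr_ge0 | apply: mulr_ge0; apply: sqr_ge0].
split.
  rewrite mE.
  have hR := taylor _ _ _ f_grad grad_lip x z.
  have hS : `|S z| <= Lg / 2 * (beta ^+ 2 * Delta ^+ 2) * Lam1.
    rewrite /S; apply: le_trans (ler_norm_sum _ _ _) _.
    apply: (@le_trans _ _ (\sum_i Lg / 2 * (beta ^+ 2 * Delta ^+ 2) * `|qeval x (lc i) (lg i) (lH i) z|)).
      apply: ler_sum => i _; rewrite normrM; apply: ler_wpM2r => //.
    by rewrite -mulr_sumr; apply: ler_wpM2l (hLam1 z hz).
  have e : f x + dot (gradf x) (z - x) + S z - f z
         = S z - (f z - f x - dot (gradf x) (z - x)) by ring.
  rewrite e; apply: le_trans (ler_normB _ _) _.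
  have hR' : Lg / 2 * dot (z - x) (z - x) <= Lg / 2 * Delta ^+ 2.
    by apply: ler_wpM2l => //; apply: divr_ge0.
  have fin : Lg / 2 * (beta ^+ 2 * Delta ^+ 2) * Lam1 + Lg / 2 * Delta ^+ 2 <= kmf * Delta ^+ 2.
    have eq : kmf * Delta ^+ 2 - (Lg / 2 * (beta ^+ 2 * Delta ^+ 2) * Lam1 + Lg / 2 * Delta ^+ 2)
            = kH / 2 * (beta ^+ 2 * Lam1 * Delta ^+ 2) + kH / 2 * Delta ^+ 2.
      by rewrite /kmf; field.
    rewrite -subr_ge0 eq.
    have k2 : 0 <= kH / 2 by apply: divr_ge0.
    have b2 := sqr_ge0 beta; have d2 := sqr_ge0 Delta.
    apply: addr_ge0; apply: mulr_ge0 => //.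
    by apply: mulr_ge0 => //; apply: mulr_ge0.
  lra.
rewrite gE.
set W := \sum_i r i *: qgrad x (lg i) (lH i) z.
set V := gradf x + W - gradf z.
have hdir : forall i, `|dot V (qgrad x (lg i) (lH i) z)| <= 9 * Laminf / Delta * enorm V.
  move=> i; exact: (lag_dir x (lc i) (lg i) (lH i) Laminf Delta hDelta (hlsym i)
                     (fun w hw => hLaminf w hw i) z V hz).
set A := p%:R * (Lg / 2 * (beta ^+ 2 * Delta ^+ 2) * (9 * Laminf / Delta)).
have A0 : 0 <= A.
  apply: mulr_ge0; first exact: ler0n.
  apply: mulr_ge0 => //.
  by apply: divr_ge0; [apply: mulr_ge0 | apply: ltW].
have hVW : `|dot V W| <= enorm V * A.
  rewrite /W dot_sumr; apply: le_trans (ler_norm_sum _ _ _) _.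
  apply: (@le_trans _ _ (\sum_(i < p) (Lg / 2 * (beta ^+ 2 * Delta ^+ 2) * (9 * Laminf / Delta * enorm V)))).
    apply: ler_sum => i _; rewrite dotZr normrM; apply: ler_pM => //.
  rewrite sumr_const card_ord -[_ *+ p]mulr_natl /A le_eqVlt; apply/orP; left; apply/eqP.
  ring.
have hVg : `|dot V (gradf z - gradf x)| <= enorm V * (Lg * Delta).
  apply: le_trans (cauchy_schwarz _ _) _; apply: ler_wpM2l; first exact: enorm_ge0.
  apply: le_trans (grad_lip z x) _; exact: ler_wpM2l.
have eV : enorm V ^+ 2 = dot V W - dot V (gradf z - gradf x).
  by rewrite enorm_sq {2}/V !dotBr dotDr; ring.
have K0 : 0 <= A + Lg * Delta by apply: addr_ge0 => //; apply: mulr_ge0 => //; apply: ltW.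
have hVV : enorm V <= A + Lg * Delta.
  have [v0|vn0] := eqVneq (enorm V) 0; first by rewrite v0.
  have vp : 0 < enorm V by rewrite lt_def vn0 enorm_ge0.
  rewrite -(ler_pM2l vp) -expr2 eV mulrDr.
  have h1 := ler_norm (dot V W).
  have h2 := ler_normr (dot V (gradf z - gradf x)).
  have h3 : - dot V (gradf z - gradf x) <= `|dot V (gradf z - gradf x)|.
    by rewrite -normrN ler_norm.
  lra.
apply: le_trans hVV _.
have eq : kmg * Delta - (A + Lg * Delta)
        = ((Lg + kH) * beta ^+ 2 * Lam1 + 63 / 2 * (p%:R * Lg * beta ^+ 2 * Laminf)) * Delta.
  rewrite /kmg /kmf /kH /A; field.
  by []. rewrite -subr_ge0 eq; apply: mulr_ge0; last exact: ltW.
apply: addr_ge0.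
  apply: mulr_ge0 => //; apply: mulr_ge0; [exact: addr_ge0 | exact: sqr_ge0].
apply: mulr_ge0; first lra.
apply: mulr_ge0 => //; apply: mulr_ge0; last exact: sqr_ge0.
by apply: mulr_ge0 => //; exact: ler0n.
Qed.
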